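(* For the MDP $\Lambda$, there exists an optimal policy $\phi^*$ that is a threshold-type age-dependent policy. That is, there exist $K\in\mathbb{N}^+$, a finite action order $(b_1,\dots,b_K)$ with $b_k\in\mathcal{A}$ and $b_k\neq b_{k+1}$ for $1\le k<K$, and thresholds $\theta_{b_k\to b_{k+1}}\in\mathbb{N}^+$, $1\le k<K$, with $\theta_{b_1\to b_2}\le\theta_{b_2\to b_3}\le\dots$, such that $\phi^*(s)=b_1$ for $s<\theta_{b_1\to b_2}$, $\phi^*(s)=b_k$ for $\theta_{b_{k-1}\to b_k}\le s<\theta_{b_k\to b_{k+1}}$ ($1<k<K$), and $\phi^*(s)=b_K$ for $s\ge\theta_{b_{K-1}\to b_K}$.
   Context: Fix $N\in\mathbb{N}^+$ vehicle types $\mathcal{N}=\{1,\dots,N\}$. Type $n$ has arrival probability $p_n\in(0,1]$, mean operational cost $c_n\ge 0$ and mean sensing capability $r_n\in(0,1]$. Fix constants $\beta\in(0,1)$ and $\epsilon>0$. The action set is $\mathcal{A}=2^{\mathcal{N}}$ (all subsets of $\mathcal{N}$, including $\emptyset$). For $a\in\mathcal{A}$ define the success probability $Q_\emptyset=0$ and $Q_a=1-\prod_{n\in a}(1-r_np_n)$ for $a\neq\emptyset$, and the expected recruitment cost $E_a=\sum_{n\in a}p_nc_n$ ($E_\emptyset=0$). For a state (age) $\delta\in\mathbb{N}^+$ define $G_a(\delta)=Q_a(\delta^2+2\delta)\epsilon-(1+\delta)^2\epsilon$ and the immediate cost $u(\delta,a)=(1-\beta)E_a-\beta G_a(\delta)$.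 The MDP $\Lambda$ has state space $\mathbb{N}^+$, action space $\mathcal{A}$, and transitions: from state $s$ under action $a$, go to state $1$ with probability $Q_a$ and to state $s+1$ with probability $1-Q_a$. For a policy $\phi$ the average cost is $V(\phi)=\limsup_{T\to\infty}\frac1T\mathbb{E}^\phi[\sum_{t=1}^T u(S(t),A(t))]$ with $S(1)=1$; a policy is optimal if it minimizes $V$ over all policies. A deterministic stationary policy is a map $\phi:\mathbb{N}^+\to\mathcal{A}$. *)

(* Defs.v *)
From HB Require Import structures.
From mathcomp Require Import all_boot all_order all_algebra.
From mathcomp Require Import all_classical all_reals all_analysis.
Set Implicit Arguments. Unset Strict Implicit. Unset Printing Implicit Defensive.
Import Order.TTheory GRing.Theory Num.Theory.
Local Open Scope ring_scope.

Section MDP.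
Variables (R : realType) (N : nat).
Variables (p c r : 'I_N -> R) (beta eps : R).

(* Actions: subsets of the vehicle types. *)
Definition action := {set 'I_N}.

(* Q_a = 1 - prod_{n in a} (1 - r_n p_n); the empty product gives Q_emptyset = 0. *)
Definition Qa (a : action) : R := 1 - \prod_(n in a) (1 - r n * p n).
Definition Ea (a : action) : R := \sum_(n in a) p n * c n.
Definition Ga (a : action) (d : nat) : R :=
  Qa a * ((d%:R) ^+ 2 + 2 * d%:R) * eps - (1 + d%:R) ^+ 2 * eps.
Definition ucost (d : nat) (a : action) : R := (1 - beta) * Ea a - beta * Ga a d.

(* A general (history-dependent, randomized) policy: given the past history
   [(S(1),A(1)); ...; (S(t-1),A(t-1))] and the current state S(t), a probability
   weight for each action. *)
Definition policy := seq (nat * action) -> nat -> action -> R.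

Definition valid_policy (pi : policy) : Prop :=
  (forall h s a, 0 <= pi h s a) /\ (forall h s, \sum_(a : action) pi h s a = 1).

(* Jcost pi T h s = E^pi[ sum of the next T costs ] given history h and current
   state s; transitions: to 1 w.p. Q_a, to s+1 w.p. 1 - Q_a. *)
Fixpoint Jcost (pi : policy) (T : nat) (h : seq (nat * action)) (s : nat) : R :=
  match T with
  | 0 => 0
  | T'.+1 => \sum_(a : action) pi h s a *
       (ucost s a + Qa a * Jcost pi T' (rcons h (s, a)) 1
                  + (1 - Qa a) * Jcost pi T' (rcons h (s, a)) s.+1)
  end.

(* V(pi) = limsup_{T -> oo} (1/T) E^pi[ sum_{t=1}^T u(S(t),A(t)) ], S(1) = 1,
   in the extended reals (it may be +oo). *)
Definition avg_cost (pi : policy) : \bar R :=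
  limn_esup (fun T : nat => ((Jcost pi T.+1 [::] 1) / T.+1%:R)%:E).

Definition det_policy (phi : nat -> action) : policy :=
  fun _ s a => if a == phi s then 1 else 0.

End MDP.

(* Threshold-type age-dependent policy (0-indexed: b_1..b_K is nth b 0 .. nth b (K-1),
   threshold theta_{b_k -> b_{k+1}} is theta (k-1)). *)
Definition threshold_policy (A : eqType) (phi : nat -> A) : Prop :=
  exists (K : nat) (b : seq A) (theta : nat -> nat),
    [/\ (0 < K)%N, size b = K,
        (forall k, (k.+1 < K)%N -> (0 < theta k)%N /\ nth (nth (phi 1%N) b 0) b k != nth (nth (phi 1%N) b 0) b k.+1),
        (forall k, (k.+2 < K)%N -> (theta k <= theta k.+1)%N) &
        (forall s k, (0 < s)%N -> (k < K)%N ->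
           (k = 0%N \/ (theta k.-1 <= s)%N) ->
           (k = K.-1 \/ (s < theta k)%N) ->
           phi s = nth (phi 1%N) b k)].

(* Main.v *)
Set Warnings "-notation-overridden,-ambiguous-paths,-notation-incompatible-prefix".
Require Import Defs.
From HB Require Import structures.
From mathcomp Require Import all_boot all_order all_algebra.
From mathcomp Require Import all_classical all_reals all_analysis.
From mathcomp Require Import ring lra zify.
Import Order.TTheory GRing.Theory Num.Theory.
Import numFieldNormedType.Exports.
Local Open Scope ring_scope.
Local Open Scope classical_set_scope.

Section Lim.
Variable R : realType.
Local Open Scope ereal_scope.
Lemma limn_esup_le_mono (u v : (\bar R)^nat) : (forall n, u n <= v n) ->
  limn_esup u <= limn_esup v.
Proof.
move=> uv; rewrite !limn_esup_lim; apply: lee_lim; [exact: is_cvg_esups|exact: is_cvg_esups|].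
apply: nearW => n; apply: ge_ereal_sup => _ [k /= nk <-].
apply: le_trans (uv k) _; apply: ereal_sup_ubound; by exists k.
Qed.

Lemma limn_esup_harm (g C : R) :
  limn_esup (fun T => (g + C * T.+1%:R^-1)%:E) = g%:E.
Proof.
have H : (fun T => (g + C * T.+1%:R^-1)%:E) @ \oo --> g%:E.
  apply: cvg_EFin; first exact: nearW.
  have H1 : (fun T : nat => (g + C * T.+1%:R^-1)%R) @ \oo --> (g + C * 0)%R.
    apply: cvgD; first exact: cvg_cst.
    exact: (cvgM (cvg_cst C) (@cvg_harmonic R)).
  by rewrite mulr0 addr0 in H1.
by rewrite (cvg_limn_einf_sup H).2.
Qed.
End Lim.

Section MDPpart.
Variables (R : realType) (N : nat) (p c r : 'I_N -> R) (beta eps : R).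
Local Notation J := (Jcost p c r beta eps).
Local Notation u := (ucost p c r beta eps).
Local Notation Q := (Qa p r).
Hypothesis hQ0 : forall a, 0 <= Q a.
Hypothesis hQ1 : forall a, Q a <= 1.

Fixpoint Ex (pi : policy R N) (T : nat) (hs : seq (nat * action N)) (s : nat)
  (f : nat -> R) : R :=
  match T with
  | 0 => f s
  | T'.+1 => \sum_(a : action N) pi hs s a *
      (Q a * Ex pi T' (rcons hs (s, a)) 1 f + (1 - Q a) * Ex pi T' (rcons hs (s, a)) s.+1 f)
  end.

Lemma sum_aff (w : action N -> R) (F : action N -> R) (k K : R) :
  \sum_a w a = 1 -> \sum_a w a * (k * F a + K) = k * (\sum_a w a * F a) + K.
Proof.
move=> w1; rewrite mulr_sumr -[in RHS](mulr1 K) -w1 mulr_sumr -big_split /=.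
by apply: eq_bigr => a _; ring.
Qed.

Lemma lowerJ (pi : policy R N) (g : R) (h : nat -> R) :
  valid_policy pi ->
  (forall s a, (0 < s)%N -> g + h s <= u s a + Q a * h 1%N + (1 - Q a) * h s.+1) ->
  forall T hs s, (0 < s)%N -> T%:R * g + h s - Ex pi T hs s h <= J pi T hs s.
Proof.
move=> [pi0 pi1] hE; elim=> [|T IH] hs s s0 /=.
  by rewrite mul0r add0r subrr.
have -> : T.+1%:R * g + h s - \sum_a pi hs s a *
    (Q a * Ex pi T (rcons hs (s, a)) 1 h + (1 - Q a) * Ex pi T (rcons hs (s, a)) s.+1 h)
  = \sum_a pi hs s a * (-1 * (Q a * Ex pi T (rcons hs (s, a)) 1 h + (1 - Q a) * Ex pi T (rcons hs (s, a)) s.+1 h) + (T.+1%:R * g + h s)).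
  by rewrite sum_aff //; ring.
apply: ler_sum => a _; apply: ler_wpM2l => //.
have H1 := IH (rcons hs (s, a)) 1%N isT.
have H2 := IH (rcons hs (s, a)) s.+1 isT.
have E := hE s a s0.
have Q0 := hQ0 a; have Q1 := hQ1 a.
have H1' := ler_wpM2l Q0 H1.
have H2' : (1 - Q a) * (T%:R * g + h s.+1 - Ex pi T (rcons hs (s, a)) s.+1 h) <=
   (1 - Q a) * J pi T (rcons hs (s, a)) s.+1 by apply: ler_wpM2l; rewrite ?subr_ge0.
rewrite -natr1.
nra.
Qed.

Lemma Ex_bound (pi : policy R N) (f : nat -> R) (k K : R) :
  valid_policy pi ->
  (forall s a, (0 < s)%N -> Q a * f 1%N + (1 - Q a) * f s.+1 <= k * u s a + K) ->
  forall T hs s, (0 < s)%N ->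
  Ex pi T.+1 hs s f <= k * (J pi T.+1 hs s - J pi T hs s) + K.
Proof.
move=> [pi0 pi1] hB; elim=> [|T IH] hs s s0.
  rewrite /= subr0 -sum_aff //; apply: ler_sum => a _; apply: ler_wpM2l => //.
  by rewrite !mulr0 !addr0; apply: hB.
rewrite [Ex _ _.+2 _ _ _]/= [J _ T.+2 _ _]/= [J _ T.+1 _ _]/=.
rewrite -sumrB.
have -> : k * (\sum_a (pi hs s a * (u s a + Q a * J pi T.+1 (rcons hs (s, a)) 1 +
      (1 - Q a) * J pi T.+1 (rcons hs (s, a)) s.+1) -
     pi hs s a * (u s a + Q a * J pi T (rcons hs (s, a)) 1 +
      (1 - Q a) * J pi T (rcons hs (s, a)) s.+1))) + K =
  \sum_a pi hs s a * (k * (Q a * (J pi T.+1 (rcons hs (s, a)) 1 - J pi T (rcons hs (s, a)) 1)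
       + (1 - Q a) * (J pi T.+1 (rcons hs (s, a)) s.+1 - J pi T (rcons hs (s, a)) s.+1)) + K).
  rewrite sum_aff //; congr (k * _ + _); apply: eq_bigr => a _; ring.
apply: ler_sum => a _; apply: ler_wpM2l => //.
have H1 := IH (rcons hs (s, a)) 1%N isT.
have H2 := IH (rcons hs (s, a)) s.+1 isT.
have Q0 := hQ0 a; have Q1 := hQ1 a.
have H1' := ler_wpM2l Q0 H1.
have H2' : (1 - Q a) * Ex pi T.+1 (rcons hs (s, a)) s.+1 f <=
   (1 - Q a) * (k * (J pi T.+1 (rcons hs (s, a)) s.+1 - J pi T (rcons hs (s, a)) s.+1) + K)
   by apply: ler_wpM2l; rewrite ?subr_ge0.
apply: le_trans (lerD H1' H2') _; rewrite le_eqVlt; apply/orP; left; apply/eqP; ring.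
Qed.

Lemma J_det (phi : nat -> action N) T hs s :
  J (det_policy R phi) T.+1 hs s =
  u s (phi s) + Q (phi s) * J (det_policy R phi) T (rcons hs (s, phi s)) 1
    + (1 - Q (phi s)) * J (det_policy R phi) T (rcons hs (s, phi s)) s.+1.
Proof.
rewrite /= (bigD1 (phi s)) //= /det_policy eqxx mul1r big1 ?addr0 //.
by move=> a /negbTE ->; rewrite mul0r.
Qed.

Lemma upperJ (phi : nat -> action N) (g m : R) (h : nat -> R) :
  (forall s, (0 < s)%N -> u s (phi s) + Q (phi s) * h 1%N + (1 - Q (phi s)) * h s.+1 <= g + h s) ->
  (forall s, (0 < s)%N -> m <= h s) ->
  forall T hs s, (0 < s)%N -> J (det_policy R phi) T hs s <= T%:R * g + h s - m.
Proof.
move=> hE hm; elim=> [|T IH] hs s s0.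
  by rewrite /= mul0r add0r subr_ge0 hm.
rewrite J_det.
have H1 := IH (rcons hs (s, phi s)) 1%N isT.
have H2 := IH (rcons hs (s, phi s)) s.+1 isT.
have E := hE s s0.
have Q0 := hQ0 (phi s); have Q1 := hQ1 (phi s).
have H1' := ler_wpM2l Q0 H1.
have H2' : (1 - Q (phi s)) * J (det_policy R phi) T (rcons hs (s, phi s)) s.+1 <=
   (1 - Q (phi s)) * (T%:R * g + h s.+1 - m) by apply: ler_wpM2l; rewrite ?subr_ge0.
rewrite -natr1.
nra.
Qed.

Lemma avg_lower (pi : policy R N) (g k K0 : R) (h : nat -> R) :
  valid_policy pi -> 0 <= k ->
  (forall s a, (0 < s)%N -> g + h s <= u s a + Q a * h 1%N + (1 - Q a) * h s.+1) ->
  (forall s a, (0 < s)%N -> Q a * h 1%N + (1 - Q a) * h s.+1 <= k * u s a + K0) ->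
  (g%:E <= avg_cost p c r beta eps pi)%E.
Proof.
move=> vpi k0 hE hB.
set M := Num.max 0 (k * g + K0 - h 1%N).
have M0 : 0 <= M by rewrite le_max lexx.
have M1 : k * g + K0 - h 1%N <= M by rewrite le_max lexx orbT.
have key : forall T, T%:R * g - M <= J pi T [::] 1%N.
  elim=> [|T IH]; first by rewrite /= mul0r sub0r oppr_le0.
  have L := @lowerJ pi g h vpi hE T.+1 [::] 1%N isT.
  have B := @Ex_bound pi h k K0 vpi hB T [::] 1%N isT.
  have H : (1 + k) * (T.+1%:R * g - M) <= (1 + k) * J pi T.+1 [::] 1%N.
    have kI := ler_wpM2l k0 IH.
    rewrite -natr1 in L *.
    nra.
  by rewrite ler_pM2l // in H; apply: (lt_le_trans ltr01); rewrite lerDl.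
rewrite /avg_cost -(@limn_esup_harm R g (- M)).
apply: limn_esup_le_mono => T; rewrite lee_fin.
have := key T.+1.
have hT : 0 <= T.+1%:R^-1 :> R by rewrite invr_ge0 ler0n.
move/(ler_wpM2r hT); apply: le_trans.
by rewrite le_eqVlt; apply/orP; left; apply/eqP; field.
Qed.

Lemma avg_upper (phi : nat -> action N) (g m : R) (h : nat -> R) :
  (forall s, (0 < s)%N -> u s (phi s) + Q (phi s) * h 1%N + (1 - Q (phi s)) * h s.+1 <= g + h s) ->
  (forall s, (0 < s)%N -> m <= h s) ->
  (avg_cost p c r beta eps (det_policy R phi) <= g%:E)%E.
Proof.
move=> hE hm.
rewrite /avg_cost -(@limn_esup_harm R g (h 1%N - m)).
apply: limn_esup_le_mono => T; rewrite lee_fin.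
have := @upperJ phi g m h hE hm T.+1 [::] 1%N isT.
have hT : 0 <= T.+1%:R^-1 :> R by rewrite invr_ge0 ler0n.
move/(ler_wpM2r hT) => H; apply: (le_trans H).
by rewrite le_eqVlt; apply/orP; left; apply/eqP; field.
Qed.

End MDPpart.

Lemma thr_aux (A : eqType) n : forall phi : nat -> A, (forall s, (n <= s)%N -> phi s = phi n) ->
 exists (b : seq A) (theta : nat -> nat), [/\ (0 < size b)%N,
   (forall k, (k.+1 < size b)%N -> (2 <= theta k)%N /\ nth (phi 1%N) b k != nth (phi 1%N) b k.+1),
   (forall k, (k.+2 < size b)%N -> (theta k <= theta k.+1)%N) &
   (forall s k, (0 < s)%N -> (k < size b)%N -> (k = 0%N \/ (theta k.-1 <= s)%N) ->
      (k = (size b).-1 \/ (s < theta k)%N) -> phi s = nth (phi 1%N) b k)].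
Proof.
elim: n => [|n IH] phi hphi.
  exists [:: phi 1%N], (fun _ => 2%N); split => //.
  move=> s k s0 k1 _ _; rewrite /= in k1; have -> : k = 0%N by lia.
  by rewrite /= hphi // (hphi 1%N).
have [b [theta [b0 h2 h3 h4]]] := IH (fun s => phi s.+1) (fun s hs => hphi s.+1 hs).
have hb1 : phi 2%N = nth (phi 2%N) b 0.
  apply: (h4 1%N 0%N) => //; first by left.
  case: (ltnP 1 (size b)) => hs; [right; have := h2 0%N hs; lia | left; lia].
have def1 k : (k < size b)%N -> nth (phi 1%N) b k = nth (phi 2%N) b k.
  by move=> hk; apply: set_nth_default.
have [e12|n12] := eqVneq (phi 1%N) (phi 2%N).
  exists b, (fun k => (theta k).+1); split.
  - done.
  - move=> k hk; have [t2 nb] := h2 k hk; split; first lia.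
    by rewrite e12.
  - by move=> k hk; have := h3 k hk; lia.
  move=> s k s0 kb hl hr.
  case: s s0 hl hr => [//|[|s']] _ /= hl hr.
    have k0 : k = 0%N.
      case: hl => // H; case: k kb {hr} H => // k kb H.
      by have := (h2 k kb).1; simpl in H; lia.
    by rewrite k0 e12.
  rewrite e12; apply: (h4 s'.+1 k).
  - done.
  - done.
  - by case: hl => ?; [left | right; lia].
  - by case: hr => ?; [left | right; lia].
exists (phi 1%N :: b), (fun k => if k is k'.+1 then (theta k').+1 else 2%N); split.
- done.
- move=> [|k] hk /=.
    split => //; rewrite def1 ?b0 // -hb1; exact: n12.
  have [t2 nb] := h2 k hk; split; first lia.
  rewrite !def1 //; simpl in hk; lia.
- move=> [|k] hk /=.
    by have := (h2 0%N); simpl in hk; lia.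
  by have := h3 k; simpl in hk; lia.
move=> s [|k] s0 kb hl hr /=.
  case: hr => [/= hr | hr]; first lia.
  by have -> : s = 1%N by lia.
simpl in kb.
case: s s0 hl hr => [//|[|s']] _ /= hl hr.
  case: hl => //; case: k kb {hr} => [|k] kb /= H; first lia.
  by have := (h2 k kb).1; lia.
rewrite def1 //; apply: (h4 s'.+1 k).
- done.
- done.
- case: hl => //; case: k {kb hr} => [|k] /= ?; [by left | right; lia].
- by case: hr => /= ?; [left; lia | right; lia].
Qed.

Lemma thr_main (A : eqType) n (phi : nat -> A) : (forall s, (n <= s)%N -> phi s = phi n) ->
  threshold_policy phi.
Proof.
move=> /thr_aux [b [theta [b0 h2 h3 h4]]].
exists (size b), b, theta; split => //.
move=> k hk; have [t2 nb] := h2 k hk; split; first lia.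
by rewrite (set_nth_default (phi 1%N)) 1?(set_nth_default (phi 1%N) _ hk) //; lia.
Qed.

Section Constr.
Variables (R : realType) (N : nat) (p c r : 'I_N -> R) (beta eps : R).
Hypothesis hN : (0 < N)%N.
Hypothesis hp : forall n, 0 < p n <= 1.
Hypothesis hc : forall n, 0 <= c n.
Hypothesis hr : forall n, 0 < r n <= 1.
Hypothesis hbeta : 0 < beta < 1.
Hypothesis heps : 0 < eps.

Definition q (a : action N) : R := \prod_(n in a) (1 - r n * p n).
Definition Aa (a : action N) : R := (1 - beta) * Ea p c a + beta * eps.
Definition B : R := beta * eps.
Definition w (s : nat) : R := s%:R ^+ 2 + 2 * s%:R.

Lemma rp01 n : 0 <= 1 - r n * p n <= 1.
Proof.
have [r0 r1] := andP (hr n); have [p0 p1] := andP (hp n).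
apply/andP; split; last by rewrite lerBlDr lerDl mulr_ge0 // ltW.
by rewrite subr_ge0 mulr_ile1 // ltW.
Qed.

Lemma q_ge0 a : 0 <= q a.
Proof. by apply: prodr_ge0 => n _; have /andP[] := rp01 n. Qed.
Lemma q_le1 a : q a <= 1.
Proof. by apply: prodr_ile1 => n _; exact: rp01. Qed.
Lemma B_gt0 : 0 < B.
Proof. by have [b0 _] := andP hbeta; rewrite mulr_gt0. Qed.
Lemma Aa_ge0 a : 0 <= Aa a.
Proof.
have [b0 b1] := andP hbeta.
apply: addr_ge0; last by rewrite mulr_ge0 // ltW.
apply: mulr_ge0; first by rewrite subr_ge0 ltW.
apply: sumr_ge0 => n _; apply: mulr_ge0; [by have /andP[/ltW] := hp n | exact: hc].
Qed.
Lemma w_ge0 s : 0 <= w s.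
Proof. by rewrite /w addr_ge0 // ?sqr_ge0 // mulr_ge0. Qed.
Lemma w_ge s : s%:R <= w s :> R.
Proof. rewrite /w; have : 0 <= s%:R :> R by []. nra. Qed.

Lemma Q_eq a : Qa p r a = 1 - q a.
Proof. by []. Qed.

Lemma u_eq s a : ucost p c r beta eps s a = Aa a + B * q a * w s.
Proof. by rewrite /ucost /Ga Q_eq /Aa /B /w; ring. Qed.

Definition fullA : action N := [set: 'I_N]%SET.

Lemma qT_le a : q fullA <= q a.
Proof.
rewrite /q (bigID (fun n => n \in a)) /=.
have -> : \prod_(i in fullA | i \in a) (1 - r i * p i) = q a.
  by apply: eq_bigl => n; rewrite /fullA !inE.
rewrite mulrC ler_piMl ?q_ge0 //.
by apply: prodr_ile1 => n _; exact: rp01.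
Qed.

Definition n0 : 'I_N := Ordinal hN.
Lemma qT_lt1 : q fullA < 1.
Proof.
apply: (le_lt_trans (qT_le [set n0]%SET)).
rewrite /q big_set1 ltrBlDr ltrDl mulr_gt0 //.
- by have /andP[] := hr n0.
- by have /andP[] := hp n0.
Qed.

Definition astar : action N := [arg min_(a < fullA | q a == q fullA) Aa a]%O.
Lemma astar_spec : q astar = q fullA /\ forall a, q a = q fullA -> Aa astar <= Aa a.
Proof.
rewrite /astar; case: (@arg_minP _ _ _ fullA (fun a => q a == q fullA) Aa (eqxx _)) => a /eqP qa ha; split => //.
by move=> b qb; apply: ha; apply/eqP.
Qed.

Definition qs := q astar.
Lemma qs_ge0 : 0 <= qs. Proof. exact: q_ge0. Qed.
Lemma qs_lt1 : qs < 1. Proof. by rewrite /qs (astar_spec.1) qT_lt1. Qed.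
Lemma qs_le a : qs <= q a. Proof. by rewrite /qs (astar_spec.1) qT_le. Qed.

Definition X0 : R := \sum_(a | q a != qs) `|Aa astar - Aa a| / (q a - qs).

Lemma act_ok X a : X0 <= X -> Aa astar + qs * X <= Aa a + q a * X.
Proof.
move=> hX.
have [e|ne] := eqVneq (q a) qs.
  by rewrite e lerD2r; apply: astar_spec.2; rewrite e /qs astar_spec.1.
have d0 : 0 < q a - qs by rewrite subr_gt0 lt_neqAle eq_sym ne qs_le.
have : `|Aa astar - Aa a| / (q a - qs) <= X.
  apply: le_trans hX; rewrite /X0 (bigD1 a) //= lerDl.
  by apply: sumr_ge0 => b /andP[nb _]; rewrite divr_ge0 // subr_ge0 qs_le.
rewrite ler_pdivrMr // => H.
have := ler_norm (Aa astar - Aa a).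
nra.
Qed.

Definition al : R := qs * B / (1 - qs).
Definition be : R := 2 * qs * (B + al) / (1 - qs).
Definition ga (g : R) : R := (Aa astar - g + qs * (al + be)) / (1 - qs).
Definition Qd (g : R) (s : nat) : R := al * s%:R ^+ 2 + be * s%:R + ga g.

Lemma qs1_neq0 : 1 - qs != 0.
Proof. by rewrite subr_eq0 eq_sym lt_eqF // qs_lt1. Qed.
Lemma qs1_gt0 : 0 < 1 - qs.
Proof. by rewrite subr_gt0 qs_lt1. Qed.
Lemma al_ge0 : 0 <= al.
Proof.
apply: divr_ge0; last exact: ltW qs1_gt0.
apply: mulr_ge0; [exact: qs_ge0 | exact: ltW B_gt0].
Qed.
Lemma be_ge0 : 0 <= be.
Proof.
apply: divr_ge0; last exact: ltW qs1_gt0.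
apply: mulr_ge0; first by apply: mulr_ge0 => //; exact: qs_ge0.
by apply: addr_ge0; [exact: ltW B_gt0 | exact: al_ge0].
Qed.

Lemma Qd_rec g s : Qd g s = Aa astar - g + qs * (B * w s + Qd g s.+1).
Proof.
have h1 := qs1_neq0.
rewrite /Qd /w /ga /be /al -natr1; field => //.
Qed.

Definition Gmax : R := Aa astar + al + be.
Lemma ga_Gmax : ga Gmax = - (al + be).
Proof. have h1 := qs1_neq0. rewrite /ga /Gmax; field => //. Qed.

Lemma ga_mono g g' : g <= g' -> ga g' <= ga g.
Proof.
move=> gg; rewrite /ga ler_pM2r ?invr_gt0 ?qs1_gt0 //.
by rewrite lerD2r lerD2l lerN2.
Qed.

Definition S0 : nat := locked (Num.Def.archi_bound (X0 / B)).+2.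

Lemma S0_ok g s : g <= Gmax -> (S0 <= s)%N -> X0 <= B * w s + Qd g s.+1.
Proof.
move=> gG sS.
have X0B : X0 / B < s%:R.
  apply: (lt_le_trans (unstable.ltr_bound _)); rewrite ler_nat; rewrite /S0 -lock in sS; exact: ltnW (ltnW sS).
have hB := B_gt0.
have e : X0 = B * (X0 / B) by field; rewrite gt_eqF.
have h1 : X0 <= B * s%:R by rewrite {1}e ler_pM2l // ltW.
have h2 : B * s%:R <= B * w s by rewrite ler_pM2l ?B_gt0 // w_ge.
have h3 : 0 <= Qd g s.+1.
  have := ga_mono g Gmax gG; rewrite ga_Gmax /Qd => hg.
  have a0 := al_ge0; have b0 := be_ge0.
  have : 1 <= s.+1%:R :> R by rewrite ler1n.
  nra.
lra.
Qed.


Definition Fv (g : R) (s : nat) (Y : R) (a : action N) : R := Aa a - g + q a * (B * w s + Y).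
Definition best (g : R) (s : nat) (Y : R) : action N := [arg min_(a < astar) Fv g s Y a]%O.
Lemma best_spec g s Y a : Fv g s Y (best g s Y) <= Fv g s Y a.
Proof. by rewrite /best; case: arg_minP => // b _; apply. Qed.

Fixpoint Hd (g : R) (d : nat) : R :=
  match d with
  | 0 => Qd g S0
  | d'.+1 => Fv g (S0 - d'.+1) (Hd g d') (best g (S0 - d'.+1) (Hd g d'))
  end.

Definition hfun (g : R) (s : nat) : R := if (S0 <= s)%N then Qd g s else Hd g (S0 - s).
Definition phi (g : R) (s : nat) : action N :=
  if (S0 <= s)%N then astar else best g s (hfun g s.+1).

Lemma hfun_ge g s : (S0 <= s)%N -> hfun g s = Qd g s.
Proof. by rewrite /hfun => ->. Qed.

Lemma hfun_lt g s : (s < S0)%N -> hfun g s = Fv g s (hfun g s.+1) (best g s (hfun g s.+1)).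
Proof.
move=> hs.
have E : Hd g (S0 - s.+1) = hfun g s.+1.
  rewrite /hfun; case: leqP => h //.
  have -> : (S0 - s.+1 = 0)%N by lia.
  by have -> : s.+1 = S0 by lia.
rewrite {1}/hfun leqNgt hs /=.
have -> : (S0 - s = (S0 - s.+1).+1)%N by lia.
rewrite [Hd _ _.+1]/= E.
by have -> : (S0 - (S0 - s.+1).+1 = s)%N by lia.
Qed.

Lemma down_ind (P : nat -> Prop) : (forall s, (S0 <= s)%N -> P s) ->
  (forall s, (s < S0)%N -> P s.+1 -> P s) -> forall s, P s.
Proof.
move=> hge hlt.
have K : forall k, P (S0 - k)%N.
  elim=> [|k IH]; first by apply: hge; rewrite subn0.
  case: (ltnP k S0) => hk.
    have e : (S0 - k = (S0 - k.+1).+1)%N by lia.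
    apply: hlt; first lia.
    by rewrite -e.
  by have -> : (S0 - k.+1 = S0 - k)%N by lia.
move=> s; case: (leqP S0 s) => hs; first exact: hge.
by have -> : s = (S0 - (S0 - s))%N by lia.
Qed.

Lemma hfun_le_Qd g s : hfun g s <= Qd g s.
Proof.
elim/down_ind: s => [s hs|s hs IH]; first by rewrite hfun_ge.
rewrite hfun_lt // (le_trans (best_spec _ _ _ astar)) // /Fv Qd_rec.
rewrite lerD2l ler_wpM2l ?lerD2l //; exact: qs_ge0.
Qed.

Lemma hfun_lb g s : 0 <= g -> - `|ga g| - (S0 - s)%:R * g <= hfun g s.
Proof.
move=> g0; elim/down_ind: s => [s hs|s hs IH].
  rewrite hfun_ge // /Qd.
  have -> : (S0 - s = 0)%N by lia.
  rewrite mul0r subr0.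
  have a0 : 0 <= al * s%:R ^+ 2 by rewrite mulr_ge0 ?al_ge0 ?sqr_ge0.
  have b0 : 0 <= be * s%:R by rewrite mulr_ge0 ?be_ge0.
  have := ler_norm (- ga g); rewrite normrN.
  lra.
rewrite hfun_lt //.
set Y := hfun g s.+1 in IH *.
set b := best g s Y.
have -> : (S0 - s = (S0 - s.+1).+1)%N by lia.
rewrite -natr1.
have q0 := q_ge0 b; have q1 := q_le1 b.
have A0 := Aa_ge0 b; have w0 := w_ge0 s; have hB := B_gt0.
have n0 := normr_ge0 (ga g).
have sn : 0 <= (S0 - s.+1)%:R :> R by [].
set L := - `|ga g| - (S0 - s.+1)%:R * g in IH *.
have L0 : L <= 0.
  have : 0 <= (S0 - s.+1)%:R * g by rewrite mulr_ge0.
  rewrite /L; lra.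
have h1 : q b * L <= q b * Y by apply: ler_wpM2l.
have h2 : L <= q b * L.
  have -> : q b * L = L + (1 - q b) * (- L) by ring.
  by rewrite lerDl mulr_ge0 // ?subr_ge0 // oppr_ge0.
have bw : 0 <= q b * (B * w s) by rewrite mulr_ge0 // mulr_ge0 // ltW.
rewrite /Fv mulrDr.
have -> : - `|ga g| - ((S0 - s.+1)%:R + 1) * g = L - g by rewrite /L; ring.
lra.
Qed.

Lemma hfun_lip g g' s : `|hfun g s - hfun g' s| <= ((S0 - s)%:R + (1 - qs)^-1) * `|g - g'|.
Proof.
elim/down_ind: s => [s hs|s hs IH].
  rewrite !hfun_ge // /Qd.
  have -> : (S0 - s = 0)%N by lia.
  rewrite add0r.
  have -> : al * s%:R ^+ 2 + be * s%:R + ga g - (al * s%:R ^+ 2 + be * s%:R + ga g')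
      = (1 - qs)^-1 * (g' - g).
    by have h1 := qs1_neq0; rewrite /ga; field.
  by rewrite normrM ger0_norm ?invr_ge0 ?(ltW qs1_gt0) // distrC.
rewrite (hfun_lt g s hs) (hfun_lt g' s hs).
set Y := hfun g s.+1 in IH *; set Y' := hfun g' s.+1 in IH *.
set b := best g s Y; set b' := best g' s Y'.
have h1 := best_spec g s Y b'.
have h2 := best_spec g' s Y' b.
have -> : (S0 - s = (S0 - s.+1).+1)%N by lia.
rewrite -natr1.
rewrite /Fv in h1 h2 *.
have q0 := q_ge0 b; have q1 := q_le1 b.
have q0' := q_ge0 b'; have q1' := q_le1 b'.
have e1 := ler_norm (g - g'); have e2 := ler_norm (g' - g).
rewrite distrC in e2.
have g1 : q b' * (Y - Y') <= `|Y - Y'|.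
  apply: le_trans (ler_wpM2l q0' (ler_norm (Y - Y'))) _.
  by rewrite ler_piMl.
have g2 : q b * (Y' - Y) <= `|Y - Y'|.
  apply: le_trans (ler_wpM2l q0 (ler_norm (Y' - Y))) _.
  by rewrite distrC ler_piMl.
have E1 : Aa b - g + q b * (B * w s + Y) - (Aa b' - g' + q b' * (B * w s + Y'))
   <= - (g - g') + q b' * (Y - Y').
  have -> : - (g - g') + q b' * (Y - Y') =
     Aa b' - g + q b' * (B * w s + Y) - (Aa b' - g' + q b' * (B * w s + Y')) by ring.
  by rewrite lerD2r.
have E2 : (g' - g) - q b * (Y' - Y) <=
   Aa b - g + q b * (B * w s + Y) - (Aa b' - g' + q b' * (B * w s + Y')).
  have -> : (g' - g) - q b * (Y' - Y) =
     Aa b - g + q b * (B * w s + Y) - (Aa b - g' + q b * (B * w s + Y')) by ring.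
  by rewrite lerD2l lerN2.
have -> : ((S0 - s.+1)%:R + 1 + (1 - qs)^-1) * `|g - g'| =
   ((S0 - s.+1)%:R + (1 - qs)^-1) * `|g - g'| + `|g - g'| by ring.
set L := ((S0 - s.+1)%:R + (1 - qs)^-1) * `|g - g'| in IH *.
rewrite ler_norml; apply/andP; split; lra.
Qed.

Lemma hfun_nonneg0 s : 0 <= hfun 0 s.
Proof.
elim/down_ind: s => [s hs|s hs IH].
  rewrite hfun_ge // /Qd.
  have a0 := al_ge0; have b0 := be_ge0.
  have : 0 <= ga 0.
    rewrite /ga subr0; apply: divr_ge0; last exact: ltW qs1_gt0.
    apply: addr_ge0; first exact: Aa_ge0.
    by apply: mulr_ge0; [exact: qs_ge0 | exact: addr_ge0].
  have : 0 <= al * s%:R ^+ 2 by rewrite mulr_ge0 ?sqr_ge0.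
  have : 0 <= be * s%:R by rewrite mulr_ge0.
  lra.
rewrite hfun_lt // /Fv subr0.
apply: addr_ge0; first exact: Aa_ge0.
apply: mulr_ge0; first exact: q_ge0.
apply: addr_ge0 => //; apply: mulr_ge0; [exact: ltW B_gt0 | exact: w_ge0].
Qed.

Lemma hfun_Gmax : hfun Gmax 1 <= 0.
Proof.
apply: (le_trans (hfun_le_Qd _ _)).
by rewrite /Qd ga_Gmax expr1n !mulr1 subrr.
Qed.

Lemma Gmax_ge0 : 0 <= Gmax.
Proof.
rewrite /Gmax; apply: addr_ge0; last exact: be_ge0.
apply: addr_ge0; [exact: Aa_ge0 | exact: al_ge0].
Qed.

Lemma lipcont (f : R -> R) (L : R) : 0 < L ->
  (forall x y, `|f x - f y| <= L * `|x - y|) -> continuous f.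
Proof.
move=> L0 hf x; apply/cvgrPdist_lt => e e0.
near=> y.
apply: (le_lt_trans (hf x y)).
rewrite -ltr_pdivlMl //.
near: y.
apply/nbhs_ballP; exists (e / L) => /=; first by rewrite divr_gt0.
by move=> y; rewrite /ball /= mulrC.
Unshelve. all: by end_near.
Qed.

Lemma exists_g : exists g, [/\ 0 <= g, g <= Gmax & hfun g 1 = 0].
Proof.
have cont : continuous (fun g => hfun g 1).
  apply: (@lipcont _ ((S0 - 1)%:R + (1 - qs)^-1)).
    by rewrite ltr_wpDl // invr_gt0 qs1_gt0.
  by move=> x y; apply: hfun_lip.
have [] := @IVT R (fun g => hfun g 1) 0 Gmax 0 Gmax_ge0.
- by apply: continuous_subspaceT => x; apply: cont.
- apply/andP; split.
    by rewrite ge_min hfun_Gmax orbT.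
  by rewrite le_max hfun_nonneg0.
move=> g; rewrite in_itv /= => /andP[g0 g1] hg; by exists g.
Qed.


Lemma acoe g s a : g <= Gmax -> hfun g 1 = 0 ->
  g + hfun g s <= ucost p c r beta eps s a + Qa p r a * hfun g 1%N + (1 - Qa p r a) * hfun g s.+1.
Proof.
move=> gG h1; rewrite h1 mulr0 addr0 u_eq Q_eq.
have -> : 1 - (1 - q a) = q a by ring.
case: (leqP S0 s) => hs.
  rewrite (hfun_ge g s hs) (hfun_ge g s.+1 (leqW hs)) (Qd_rec g s).
  have := act_ok _ a (S0_ok g s gG hs).
  set X := B * w s + Qd g s.+1; move=> H.
  have E : q a * X = B * q a * w s + q a * Qd g s.+1 by rewrite /X; ring.
  lra.
rewrite (hfun_lt g s hs).
have := best_spec g s (hfun g s.+1) a; rewrite /Fv => H.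
have E : B * q a * w s + q a * hfun g s.+1 = q a * (B * w s + hfun g s.+1) by ring.
lra.
Qed.

Lemma acoe_phi g s : hfun g 1 = 0 ->
  ucost p c r beta eps s (phi g s) + Qa p r (phi g s) * hfun g 1%N
    + (1 - Qa p r (phi g s)) * hfun g s.+1 <= g + hfun g s.
Proof.
move=> h1; rewrite h1 mulr0 addr0 u_eq Q_eq.
have -> : 1 - (1 - q (phi g s)) = q (phi g s) by ring.
rewrite /phi.
case: (leqP S0 s) => hs /=.
  rewrite (hfun_ge g s hs) (hfun_ge g s.+1 (leqW hs)) (Qd_rec g s) /qs.
  rewrite le_eqVlt; apply/orP; left; apply/eqP; ring.
rewrite (hfun_lt g s hs) /Fv.
rewrite le_eqVlt; apply/orP; left; apply/eqP; ring.
Qed.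

Lemma hB_bound g s a : hfun g 1 = 0 ->
  Qa p r a * hfun g 1%N + (1 - Qa p r a) * hfun g s.+1 <=
  (al + be) / B * ucost p c r beta eps s a + `|al + be + ga g|.
Proof.
move=> h1; rewrite h1 mulr0 add0r u_eq Q_eq.
have -> : 1 - (1 - q a) = q a by ring.
have q0 := q_ge0 a; have q1 := q_le1 a.
have H1 : q a * hfun g s.+1 <= q a * Qd g s.+1 by apply: ler_wpM2l => //; exact: hfun_le_Qd.
have E : Qd g s.+1 = al * w s + be * s%:R + (al + be + ga g).
  by rewrite /Qd /w -natr1; ring.
have a0 := al_ge0; have b0 := be_ge0; have ws := w_ge s; have w0 := w_ge0 s.
have H2 : be * s%:R <= be * w s by apply: ler_wpM2l.
have n1 := ler_norm (al + be + ga g); have n0 := normr_ge0 (al + be + ga g).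
have H3 : Qd g s.+1 <= (al + be) * w s + `|al + be + ga g| by rewrite E; lra.
have H4 : q a * Qd g s.+1 <= q a * ((al + be) * w s) + `|al + be + ga g|.
  have := ler_wpM2l q0 H3; rewrite mulrDr => H.
  have : q a * `|al + be + ga g| <= `|al + be + ga g| by rewrite ler_piMl.
  lra.
have hB := B_gt0; have A0 := Aa_ge0 a.
have E2 : (al + be) / B * (Aa a + B * q a * w s) = (al + be) / B * Aa a + q a * ((al + be) * w s).
  by field; rewrite gt_eqF.
have H5 : 0 <= (al + be) / B * Aa a by rewrite mulr_ge0 // divr_ge0 ?addr_ge0 // ltW.
rewrite E2; lra.
Qed.

Lemma constr_main : exists phi0 : nat -> action N,
    (forall pi : policy R N, valid_policy pi ->
       (avg_cost p c r beta eps (det_policy R phi0) <= avg_cost p c r beta eps pi)%E)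
    /\ threshold_policy phi0.
Proof.
have hQ0 a : 0 <= Qa p r a by rewrite Q_eq subr_ge0 q_le1.
have hQ1 a : Qa p r a <= 1 by rewrite Q_eq lerBlDr lerDl q_ge0.
have [g [g0 gG h1]] := exists_g.
exists (phi g); split.
  move=> pi vpi.
  have U : (avg_cost p c r beta eps (det_policy R (phi g)) <= g%:E)%E.
    apply: (@avg_upper R N p c r beta eps hQ0 hQ1 (phi g) g (- `|ga g| - S0%:R * g) (hfun g)).
      by move=> s _; apply: acoe_phi.
    move=> s _; apply: le_trans (hfun_lb g s g0).
    rewrite lerD2l lerN2 ler_wpM2r // ler_nat; exact: leq_subr.
  have Lw : (g%:E <= avg_cost p c r beta eps pi)%E.
    apply: (@avg_lower R N p c r beta eps hQ0 hQ1 pi g ((al + be) / B) `|al + be + ga g| (hfun g) vpi).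
    - by rewrite divr_ge0 ?addr_ge0 ?al_ge0 ?be_ge0 // ltW // B_gt0.
    - by move=> s a _; apply: acoe.
    - by move=> s a _; apply: hB_bound.
  exact: le_trans U Lw.
apply: (@thr_main _ S0) => s hs.
by rewrite /phi hs leqnn.
Qed.

End Constr.

Theorem theorem1 (R : realType) (N : nat) (p c r : 'I_N -> R) (beta eps : R)
  (hN : (0 < N)%N)
  (hp : forall n, 0 < p n <= 1) (hc : forall n, 0 <= c n)
  (hr : forall n, 0 < r n <= 1)
  (hbeta : 0 < beta < 1) (heps : 0 < eps) :
  exists phi : nat -> action N,
    (forall pi : policy R N, valid_policy pi ->
       (avg_cost p c r beta eps (det_policy R phi) <= avg_cost p c r beta eps pi)%E)
    /\ threshold_policy phi.
Proof.
exact: (@constr_main R N p c r beta eps hN hp hc hr hbeta heps).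
Qed.
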